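(* Assume (A.3). Then there is a finite constant $C_r>0$, independent of $h$, such that for all sufficiently small $h$, $r^2(\hat y_h,\hat u_h)\le C_rh^{2\lambda\eta}$.
   Context: Let $T>0$. $\mathcal{X}$: pairs $(y,u)$ with $y:[0,T]\to\mathbb{R}^{n_y}$, $y\in L^\infty$, $\dot y\in L^2$, $u\in L^\infty([0,T];\mathbb{R}^{n_u})$; $\|(y,u)\|_{\mathcal{X}}=\|\dot y\|_{L^2}+\operatorname{ess\,sup}_t\|(y(t),u(t))\|_\infty$, where $\|\dot y\|_{L^2}=(\int_0^T\|\dot y\|_2^2dt)^{1/2}$. Given $M,b$ on $\mathbb{R}^{n_y}\times\mathbb{R}^{n_y}$ (values in $\mathbb{R}$, $\mathbb{R}^{n_b}$), $f_1,f_2$ on $\mathbb{R}^{n_y}\times\mathbb{R}^{n_u}\times[0,T]$ (values in $\mathbb{R}^{n_y}$, $\mathbb{R}^{n_c}$) and bounds $y_L\le y_R$, $u_L\le u_R$, the optimal control problem minimizes $M(y(0),y(T))$ over $\mathcal{X}$ subject to $b(y(0),y(T))=0$, $\dot y=f_1(y,u,t)$ and $f_2(y,u,t)=0$ a.e., and the bounds for all $t$; $(y^\star,u^\star)$ is a local minimizer. $f(\dot y,y,u,t)=(f_1(y,u,t)-\dot y,f_2(y,u,t))$, $r(y,u)=(\int_0^T\|f(\dot y(t),y(t),u(t),t)\|_2^2dt+\|b(y(0),y(T))\|_2^2)^{1/2}$. Mesh $0=t_1<\dots<t_{N+1}=T$, $h=\max_i(t_{i+1}-t_i)$, degree $p$;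 $\mathcal{X}_{h,p}$: $y_h$ continuous and polynomial of degree $\le p$ on each mesh interval, $u_h$ polynomial of degree $\le p-1$ on each mesh interval; $\mathcal{B}_{h,p}\subset\mathcal{X}_{h,p}$ the pairs satisfying the bounds at the sampling points. (Approximability) there are $h_0,\eta,C_\eta>0$ such that for all $h\le h_0$ there is $(y_h,u_h)\in\mathcal{B}_{h,p}$ with $\|(y^\star,u^\star)-(y_h,u_h)\|_{\mathcal{X}}\le C_\eta h^\eta$; $(\hat y_h,\hat u_h)$ denotes a fixed such pair. (A.3): there are $\lambda\in(0,1]$, $C_\lambda>0$, $\epsilon>0$ with $|M(y^\star(0),y^\star(T))-M(a,a')|\le C_\lambda\|(y^\star(0)-a,y^\star(T)-a')\|_2^\lambda$ and $\|b(y^\star(0),y^\star(T))-b(a,a')\|_2\le C_\lambda\|(y^\star(0)-a,y^\star(T)-a')\|_2^\lambda$ whenever $\|(y^\star(0)-a,y^\star(T)-a')\|_2\le\epsilon$, and for each $t$, $\|(f_1(y^\star(t),u^\star(t),t)-f_1(v,w,t),f_2(y^\star(t),u^\star(t),t)-f_2(v,w,t))\|_2\le C_\lambda\|(y^\star(t)-v,u^\star(t)-w)\|_2^\lambda$ whenever $\|(y^\star(t)-v,u^\star(t)-w)\|_2\le\epsilon$. *)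

(* Defs.v *)
From HB Require Import structures.
From mathcomp Require Import all_boot all_order all_algebra.
From mathcomp Require Import all_classical all_reals all_analysis.
Set Implicit Arguments. Unset Strict Implicit. Unset Printing Implicit Defensive.
Import Order.TTheory GRing.Theory Num.Theory.
Import numFieldNormedType.Exports.
Local Open Scope classical_set_scope.
Local Open Scope ring_scope.

Section OCPDefs.
Variable R : realType.
Local Notation mu := (@lebesgue_measure R).

Definition Icc (a b : R) : set R := `[a, b].

Definition vsub n (v w : 'I_n -> R) : 'I_n -> R := fun i => v i - w i.

Definition norm2 n (v : 'I_n -> R) : R := Num.sqrt (\sum_i v i ^+ 2).
Definition norm2_pair n m (v : 'I_n -> R) (w : 'I_m -> R) : R :=
  Num.sqrt (\sum_i v i ^+ 2 + \sum_j w j ^+ 2).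

Definition norminf_pair n m (v : 'I_n -> R) (w : 'I_m -> R) : R :=
  Num.max (\big[Num.max/0]_i `|v i|) (\big[Num.max/0]_j `|w j|).

Definition esssup_on (D : set R) (g : R -> R) : \bar R :=
  ereal_inf [set M : \bar R | {ae mu, forall t, D t -> ((g t)%:E <= M)%E}].

Definition L2sq (T : R) n (v : R -> 'I_n -> R) : \bar R :=
  (\int[mu]_(t in (Icc 0 T)) ((norm2 (v t)) ^+ 2)%:E)%E.

Definition esqrt (x : \bar R) : \bar R :=
  match x with
  | EFin r => (Num.sqrt r)%:E
  | EPInf => +oo%E
  | ENInf => 0%E
  end.

(* (y, u) in X, with dy the (weak) derivative of y:
   y is absolutely continuous on [0,T] with derivative dy in L^2,
   y, u measurable and essentially bounded on [0,T]. *)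
Definition memX (T : R) ny nu (y dy : R -> 'I_ny -> R) (u : R -> 'I_nu -> R) : Prop :=
  [/\ (forall i, measurable_fun (Icc 0 T) (fun t => y t i)) /\
        (forall j, measurable_fun (Icc 0 T) (fun t => u t j)),
      (forall i, mu.-integrable (Icc 0 T) (fun t => (dy t i)%:E)),
      (forall i t, 0 <= t <= T ->
         (y t i)%:E = ((y 0 i)%:E + \int[mu]_(s in (Icc 0 t)) (dy s i)%:E)%E),
      (L2sq T dy < +oo)%E &
      (esssup_on (Icc 0 T) (fun t => norminf_pair (y t) (u t)) < +oo)%E ].

Definition Xdist (T : R) ny nu (y dy : R -> 'I_ny -> R) (u : R -> 'I_nu -> R)
    (y' dy' : R -> 'I_ny -> R) (u' : R -> 'I_nu -> R) : \bar R :=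
  (esqrt (L2sq T (fun t => vsub (dy t) (dy' t)))
   + esssup_on (Icc 0 T) (fun t => norminf_pair (vsub (y t) (y' t)) (vsub (u t) (u' t))))%E.

Definition in_bounds ny nu (yL yR : 'I_ny -> R) (uL uR : 'I_nu -> R)
    (yt : 'I_ny -> R) (ut : 'I_nu -> R) : Prop :=
  (forall i, yL i <= yt i <= yR i) /\ (forall j, uL j <= ut j <= uR j).

Definition feasible (T : R) ny nu nb nc
    (b : ('I_ny -> R) -> ('I_ny -> R) -> 'I_nb -> R)
    (f1 : ('I_ny -> R) -> ('I_nu -> R) -> R -> 'I_ny -> R)
    (f2 : ('I_ny -> R) -> ('I_nu -> R) -> R -> 'I_nc -> R)
    yL yR uL uR (y dy : R -> 'I_ny -> R) (u : R -> 'I_nu -> R) : Prop :=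
  [/\ b (y 0) (y T) = (fun _ => 0),
      {ae mu, forall t, 0 <= t <= T -> dy t = f1 (y t) (u t) t},
      {ae mu, forall t, 0 <= t <= T -> f2 (y t) (u t) t = (fun _ => 0)} &
      (forall t, 0 <= t <= T -> in_bounds yL yR uL uR (y t) (u t)) ].

Definition local_minimizer (T : R) ny nu nb nc
    (M : ('I_ny -> R) -> ('I_ny -> R) -> R)
    (b : ('I_ny -> R) -> ('I_ny -> R) -> 'I_nb -> R)
    (f1 : ('I_ny -> R) -> ('I_nu -> R) -> R -> 'I_ny -> R)
    (f2 : ('I_ny -> R) -> ('I_nu -> R) -> R -> 'I_nc -> R)
    yL yR uL uR (ys dys : R -> 'I_ny -> R) (us : R -> 'I_nu -> R) : Prop :=
  [/\ memX T ys dys us,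
      feasible T b f1 f2 yL yR uL uR ys dys us &
      exists2 delta : R, 0 < delta &
        forall y dy u, memX T y dy u -> feasible T b f1 f2 yL yR uL uR y dy u ->
          (Xdist T y dy u ys dys us <= delta%:E)%E ->
          M (ys 0) (ys T) <= M (y 0) (y T) ].

Definition rsq (T : R) ny nu nb nc
    (b : ('I_ny -> R) -> ('I_ny -> R) -> 'I_nb -> R)
    (f1 : ('I_ny -> R) -> ('I_nu -> R) -> R -> 'I_ny -> R)
    (f2 : ('I_ny -> R) -> ('I_nu -> R) -> R -> 'I_nc -> R)
    (y dy : R -> 'I_ny -> R) (u : R -> 'I_nu -> R) : \bar R :=
  (\int[mu]_(t in (Icc 0 T))
      ((norm2_pair (vsub (f1 (y t) (u t) t) (dy t)) (f2 (y t) (u t) t)) ^+ 2)%:E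
   + ((norm2 (b (y 0) (y T))) ^+ 2)%:E)%E.

Definition is_mesh (T : R) (N : nat) (tm : nat -> R) (h : R) : Prop :=
  [/\ (0 < N)%N, tm 0%N = 0, tm N = T,
      (forall k, (k < N)%N -> tm k < tm k.+1) &
      h = \big[Num.max/0]_(k < N) (tm k.+1 - tm k) ].

Definition in_Xhp (T : R) (p N : nat) (tm : nat -> R) ny nu
    (y : R -> 'I_ny -> R) (u : R -> 'I_nu -> R) : Prop :=
  [/\ (forall i, {within (Icc 0 T), continuous (fun t => y t i)}),
      (forall k i, (k < N)%N -> exists P : {poly R}, (size P <= p.+1)%N /\
          forall t, tm k <= t <= tm k.+1 -> y t i = P.[t]) &
      (forall k j, (k < N)%N -> exists Q : {poly R}, (size Q <= p)%N /\
          forall t, tm k < t < tm k.+1 -> u t j = Q.[t]) ].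

Definition in_Bhp (T : R) (p N : nat) (tm : nat -> R) (samp : set R) ny nu
    yL yR uL uR (y : R -> 'I_ny -> R) (u : R -> 'I_nu -> R) : Prop :=
  in_Xhp T p N tm y u /\
  (forall t, samp t -> in_bounds yL yR uL uR (y t) (u t)).

Definition A3 (T : R) ny nu nb nc
    (M : ('I_ny -> R) -> ('I_ny -> R) -> R)
    (b : ('I_ny -> R) -> ('I_ny -> R) -> 'I_nb -> R)
    (f1 : ('I_ny -> R) -> ('I_nu -> R) -> R -> 'I_ny -> R)
    (f2 : ('I_ny -> R) -> ('I_nu -> R) -> R -> 'I_nc -> R)
    (ys : R -> 'I_ny -> R) (us : R -> 'I_nu -> R) (lam Cl eps : R) : Prop :=
  [/\ [/\ 0 < lam <= 1, 0 < Cl & 0 < eps],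
      (forall a a' : 'I_ny -> R,
         norm2_pair (vsub (ys 0) a) (vsub (ys T) a') <= eps ->
         `|M (ys 0) (ys T) - M a a'|
           <= Cl * norm2_pair (vsub (ys 0) a) (vsub (ys T) a') `^ lam),
      (forall a a' : 'I_ny -> R,
         norm2_pair (vsub (ys 0) a) (vsub (ys T) a') <= eps ->
         norm2 (vsub (b (ys 0) (ys T)) (b a a'))
           <= Cl * norm2_pair (vsub (ys 0) a) (vsub (ys T) a') `^ lam) &
      (forall t, 0 <= t <= T -> forall v w,
         norm2_pair (vsub (ys t) v) (vsub (us t) w) <= eps ->
         norm2_pair (vsub (f1 (ys t) (us t) t) (f1 v w t))
                    (vsub (f2 (ys t) (us t) t) (f2 v w t))
           <= Cl * norm2_pair (vsub (ys t) v) (vsub (us t) w) `^ lam) ].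

End OCPDefs.

(* Main.v *)
Require Import Defs.
From HB Require Import structures.
From mathcomp Require Import all_boot all_order all_algebra.
From mathcomp Require Import all_classical all_reals all_analysis.
From mathcomp Require Import ring lra.
From mathcomp Require Import measurable_realfun.
Import Order.TTheory GRing.Theory Num.Theory.
Import numFieldNormedType.Exports.
Local Open Scope classical_set_scope.
Local Open Scope ring_scope.



Lemma near_ae_bound (R : realType) (T x C e : R) (phi : R -> R) :
  0 < T -> 0 <= x <= T -> 0 < e ->
  (\forall t \near x, 0 <= t <= T -> `|phi t - phi x| < e) ->
  {ae (@lebesgue_measure R), forall t, `[0, T]%classic t -> `|phi t| <= C} ->
  `|phi x| <= C + e.
Proof.
move=> T0 /andP[x0 xT] e0 /nbhs_ballP[d /= d0 Hd] [N [mN N0 sN]].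
rewrite leNgt; apply/negP => Hlt.
pose a := Num.max 0 (x - d / 2); pose b := Num.min T (x + d / 2).
have ab : a < b.
  rewrite /a /b gt_max !lt_min; apply/andP; split; apply/andP; split; lra.
have sub : `]a, b[%classic `<=` N.
  move=> t /=; rewrite in_itv /= => /andP[aT tb]; apply: sN => /= H.
  move: aT tb; rewrite /a /b gt_max lt_min => /andP[t0 xt] /andP[tT tx].
  have tI : 0 <= t <= T by rewrite !ltW.
  have tI2 : `[0, T]%classic t by rewrite /= in_itv /= tI.
  have := H tI2.
  suff : C < `|phi t| by rewrite leNgt => ->.
  have : `|phi t - phi x| < e.
    apply: Hd tI; rewrite /ball /=.
    rewrite ltr_norml; apply/andP; split; lra.
  move=> Hte.
  have H2 := lerB_normD (phi x) (phi t - phi x).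
  have E : phi x + (phi t - phi x) = phi t by rewrite addrC subrK.
  rewrite E in H2.
  lra.
have H0 : (@lebesgue_measure R `]a, b[%classic <= 0)%E.
  rewrite -N0; apply: le_measure => //; rewrite inE //; exact: measurable_itv.
move: H0; rewrite lebesgue_measure_itv /= lte_fin ab.
by rewrite -EFinD lee_fin subr_le0 leNgt ab.
Qed.


Section Aux.
Variable R : realType.

Lemma sumsq_ge0 n (v : 'I_n -> R) : 0 <= \sum_i v i ^+ 2.
Proof. by apply: sumr_ge0 => i _; exact: sqr_ge0. Qed.

Lemma norm2_sq n (v : 'I_n -> R) : norm2 v ^+ 2 = \sum_i v i ^+ 2.
Proof. by rewrite /norm2 sqr_sqrtr // sumsq_ge0. Qed.

Lemma norm2_pair_sq n m (v : 'I_n -> R) (w : 'I_m -> R) :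
  norm2_pair v w ^+ 2 = \sum_i v i ^+ 2 + \sum_j w j ^+ 2.
Proof. by rewrite /norm2_pair sqr_sqrtr // addr_ge0 // sumsq_ge0. Qed.

Lemma sumsq_le n (v : 'I_n -> R) c : 0 <= c -> (forall i, `|v i| <= c) ->
  \sum_i v i ^+ 2 <= n%:R * c ^+ 2.
Proof.
move=> c0 H.
apply: (@le_trans _ _ (\sum_(i < n) c ^+ 2)).
  apply: ler_sum => i _; have := H i; rewrite ler_norml => /andP[h1 h2]; nra.
by rewrite sumr_const card_ord mulr_natl.
Qed.

Lemma norm2_pair_le n m (v : 'I_n -> R) (w : 'I_m -> R) c : 0 <= c ->
  (forall i, `|v i| <= c) -> (forall j, `|w j| <= c) ->
  norm2_pair v w <= Num.sqrt (n + m)%:R * c.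
Proof.
move=> c0 Hv Hw.
rewrite -(ger0_norm c0) -sqrtr_sqr -sqrtrM ?ler0n //.
rewrite ler_sqrt ?mulr_ge0 ?sqr_ge0 // natrD mulrDl.
by apply: lerD; apply: sumsq_le.
Qed.

Lemma norminf_le n m (v : 'I_n -> R) (w : 'I_m -> R) c :
  norminf_pair v w <= c -> (forall i, `|v i| <= c) /\ (forall j, `|w j| <= c).
Proof.
rewrite /norminf_pair ge_max => /andP[h1 h2]; split.
  by move=> i; apply: le_trans h1; exact: le_bigmax.
by move=> j; apply: le_trans h2; exact: le_bigmax.
Qed.

Lemma norminf_ge0 n m (v : 'I_n -> R) (w : 'I_m -> R) : 0 <= norminf_pair v w.
Proof.
rewrite /norminf_pair le_max; apply/orP; left.
by elim/big_ind: _ => [//|a b' a0 b0|i _]; rewrite ?le_max ?a0 ?normr_ge0.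
Qed.

Lemma integrand_le ny nc (F dS dH : 'I_ny -> R) (G : 'I_nc -> R) :
  norm2_pair (vsub F dH) G ^+ 2 <=
  2 * norm2_pair (vsub dS F) (vsub (fun=> 0) G) ^+ 2 + 2 * norm2 (vsub dS dH) ^+ 2.
Proof.
rewrite !norm2_pair_sq norm2_sq /vsub !mulrDr !mulr_sumr.
rewrite -addrA [X in _ <= _ + X]addrC addrA.
apply: lerD; last by apply: ler_sum => j _ /=; rewrite sub0r sqrrN; nra.
rewrite -big_split /=; apply: ler_sum => i _.
have := sqr_ge0 (dS i - F i + (dS i - dH i)); nra.
Qed.

End Aux.


Lemma itv_not_negligible (R : realType) (a b : R) (P : R -> Prop) :
  a < b -> {ae (@lebesgue_measure R), forall t, P t} ->
  (forall t, a < t < b -> ~ P t) -> False.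
Proof.
move=> ab [N [mN N0 sN]] nP.
have sub : `]a, b[%classic `<=` N.
  by move=> t /=; rewrite in_itv /= => /nP H; apply: sN.
have H0 : (@lebesgue_measure R `]a, b[%classic <= 0)%E.
  rewrite -N0; apply: le_measure => //; rewrite inE //; exact: measurable_itv.
move: H0; rewrite lebesgue_measure_itv /= lte_fin ab.
by rewrite -EFinD lee_fin subr_le0 leNgt ab.
Qed.

Lemma esssup_ge0 (R : realType) (T : R) (g : R -> R) : 0 < T ->
  (forall t, 0 <= g t) -> (0 <= esssup_on (Icc 0 T) g)%E.
Proof.
move=> T0 g0; apply/ereal_infP => M HM.
rewrite leNgt; apply/negP => M0; move: HM => /= HM; apply: (@itv_not_negligible R 0 T _ T0 HM).
move=> t /andP[t0 tT] H.
have : Icc 0 T t by rewrite /Icc /= in_itv /= !ltW.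
move=> /H; apply/negP; rewrite -ltNge (lt_le_trans M0) // lee_fin; exact: g0.
Qed.

Lemma esssup_ae (R : realType) (D : set R) (g : R -> R) (c : R) : 0 < c ->
  (esssup_on D g <= c%:E)%E ->
  {ae (@lebesgue_measure R), forall t, D t -> g t <= 2 * c}.
Proof.
move=> c0 H.
have : (esssup_on D g < (2 * c)%:E)%E.
  by rewrite (le_lt_trans H) // lte_fin; lra.
move=> /ereal_inf_lt [M HM HM2].
apply: (@filterS _ _ (ae_filter_ringOfSetsType _) _ _ _ HM) => t Ht Dt.
by rewrite -lee_fin (le_trans (Ht Dt)) // ltW.
Qed.

Lemma esqrt_ge0 (R : realType) (x : \bar R) : (0 <= esqrt x)%E.
Proof. by case: x => [r| |] //=; rewrite lee_fin sqrtr_ge0. Qed.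

Lemma esqrt_le (R : realType) (x : \bar R) (c : R) : (0 <= x)%E -> 0 <= c ->
  (esqrt x <= c%:E)%E -> (x <= (c ^+ 2)%:E)%E.
Proof.
case: x => [r| |] //= r0 c0; rewrite !lee_fin => H.
by rewrite -(sqr_sqrtr r0) lerXn2r // ?nnegrE ?sqrtr_ge0.
Qed.

Lemma L2sq_ge0 (R : realType) (T : R) n (v : R -> 'I_n -> R) : (0 <= L2sq T v)%E.
Proof. by apply: integral_ge0 => t _; rewrite lee_fin sqr_ge0. Qed.


Lemma EFin_addI (R : realType) (x y : R) (I : \bar R) :
  x%:E = (y%:E + I)%E -> I = (x - y)%:E.
Proof.
case: I => [r| |] //= [->]; congr EFin; lra.
Qed.

Lemma rep_fine (R : realType) (T : R) (y dy : R -> R) :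
  (forall t, 0 <= t <= T ->
     (y t)%:E = ((y 0)%:E + \int[@lebesgue_measure R]_(s in (Icc 0 t)) (dy s)%:E)%E) ->
  forall t, 0 <= t <= T -> y t = y 0 + parameterized_integral (@lebesgue_measure R) 0 t dy.
Proof.
move=> H t tI; have := EFin_addI _ _ _ _ (H t tI).
rewrite /parameterized_integral /Rintegral /Icc => ->; rewrite /=; lra.
Qed.

Lemma endpoint_near (R : realType) (T : R) (y dy yh : R -> R) (x e : R) :
  0 < T -> (x = 0 \/ x = T) -> 0 < e ->
  (forall t, 0 <= t <= T -> y t = y 0 + parameterized_integral (@lebesgue_measure R) 0 t dy) ->
  (@lebesgue_measure R).-integrable `[0, T] (EFin \o dy) ->
  {within (Icc 0 T), continuous yh} ->
  \forall t \near x, 0 <= t <= T -> `|(y t - yh t) - (y x - yh x)| < e.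
Proof.
move=> T0 hx e0 rep intf cont.
have xI : 0 <= x <= T by case: hx => ->; rewrite ?lexx ?ltW.
have e20 : 0 < e / 2 by rewrite divr_gt0.
have Hyh : \forall t \near x, 0 <= t <= T -> `|yh x - yh t| < e / 2.
  move/subspace_continuousP : cont => /(_ x).
  have xI' : Icc 0 T x by rewrite /Icc /= in_itv /= xI.
  move=> /(_ xI') /cvgr_dist_lt /(_ _ e20).
  move=> H.
  have H' : \forall t \near x, Icc 0 T t -> `|yh x - yh t| < e / 2 := H.
  apply: filterS H' => t Ht tI; apply: Ht.
  by rewrite /Icc /= in_itv /= tI.
have Hy : \forall t \near x, 0 <= t <= T -> `|y x - y t| < e / 2.
  case: hx => hx; subst x.
  - have := parameterized_integral_cvg_left T0 intf.
    move=> /cvgr_dist_lt /(_ _ e20); apply: filterS => t Ht tI.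
    rewrite (rep t tI).
    have -> : forall a b : R, a - (a + b) = 0 - b by move=> *; ring.
    exact: Ht.
  - have := parameterized_integral_cvg_at_left T0 intf.
    move=> /cvgr_dist_lt /(_ _ e20) Ht.
    have Ht' : \forall t \near T, t < T -> 
       `|parameterized_integral (@lebesgue_measure R) 0 T dy -
         parameterized_integral (@lebesgue_measure R) 0 t dy| < e / 2 := Ht.
    apply: filterS Ht' => t Ht2 tI.
    have [tT|tT] := ltP t T.
      have TI : 0 <= T <= T by apply/andP; split => //; exact: ltW.
      rewrite (rep t tI) (rep T TI).
      have -> : forall a b c : R, a + b - (a + c) = b - c by move=> *; ring.
      exact: Ht2.
    have -> : t = T by apply/eqP; rewrite eq_le tT andbT; case/andP: tI.
    by rewrite subrr normr0.
apply: filterS2 Hyh Hy => t h1 h2 tI.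
have {}h1 := h1 tI; have {}h2 := h2 tI.
have -> : y t - yh t - (y x - yh x) = (yh x - yh t) - (y x - y t) by ring.
apply: (le_lt_trans (ler_normB _ _)).
by rewrite (splitr e) ltrD.
Qed.


Section NM.
Local Open Scope ereal_scope.
Import HBNNSimple.
Lemma ae_le_integral_nm d (T : measurableType d) (R : realType)
  (mu : {measure set T -> \bar R}) (D : set T) (mD : measurable D)
  (f g : T -> \bar R) :
  (forall x, D x -> (0 <= f x)%E) -> (forall x, D x -> (0 <= g x)%E) ->
  measurable_fun D g ->
  {ae mu, forall x, D x -> (f x <= g x)%E} ->
  (\int[mu]_(x in D) f x <= \int[mu]_(x in D) g x)%E.
Proof.
move=> f0 g0 mg ae.
rewrite ge0_integralE //; apply: ge_ereal_sup => _ [h /= hf <-].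
have hD : forall x, ~ D x -> h x = 0%R.
  move=> x Dx; apply/eqP; rewrite eq_le; apply/andP; split => //.
  by have := hf x; rewrite /patch; case: ifPn => [/set_mem //|_]; rewrite lee_fin.
rewrite -integralT_nnsfun.
have -> : (\int[mu]_x (h x)%:E = \int[mu]_(x in D) (h x)%:E)%E.
  rewrite [RHS]integral_mkcond; apply: eq_integral => x _.
  rewrite /patch; case: ifPn => // /negP Dx.
  by rewrite hD // => Dx'; apply: Dx; rewrite inE.
apply: ae_ge0_le_integral => //.
- by move=> x _; rewrite lee_fin.
- by apply/measurable_EFinP; apply: measurable_funTS.
- apply: filterS ae => x H Dx; apply: le_trans (H Dx).
  by have := hf x; rewrite /patch; case: ifPn => // /negP; rewrite inE.
Qed.

End NM.

Theorem mainTheorem18 (R : realType) (T : R) (ny nu nb nc p : nat)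
    (M : ('I_ny -> R) -> ('I_ny -> R) -> R)
    (b : ('I_ny -> R) -> ('I_ny -> R) -> 'I_nb -> R)
    (f1 : ('I_ny -> R) -> ('I_nu -> R) -> R -> 'I_ny -> R)
    (f2 : ('I_ny -> R) -> ('I_nu -> R) -> R -> 'I_nc -> R)
    (yL yR : 'I_ny -> R) (uL uR : 'I_nu -> R)
    (ys dys : R -> 'I_ny -> R) (us : R -> 'I_nu -> R)
    (samp : nat -> (nat -> R) -> set R)
    (yh dyh : nat -> (nat -> R) -> R -> 'I_ny -> R)
    (uh : nat -> (nat -> R) -> R -> 'I_nu -> R)
    (h0 eta Ceta lam Cl eps : R) :
  0 < T -> (0 < p)%N ->
  (forall i, yL i <= yR i) -> (forall j, uL j <= uR j) ->
  local_minimizer T M b f1 f2 yL yR uL uR ys dys us ->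
  (* approximability, with (yh N tm, uh N tm) the fixed approximating pair
     for the mesh (N, tm) of size h *)
  0 < h0 -> 0 < eta -> 0 < Ceta ->
  (forall N tm h, is_mesh T N tm h -> h <= h0 ->
     [/\ memX T (yh N tm) (dyh N tm) (uh N tm),
         in_Bhp T p N tm (samp N tm) yL yR uL uR (yh N tm) (uh N tm) &
         (Xdist T ys dys us (yh N tm) (dyh N tm) (uh N tm)
            <= (Ceta * h `^ eta)%:E)%E ]) ->
  A3 T M b f1 f2 ys us lam Cl eps ->
  exists2 Cr : R, 0 < Cr &
    exists2 h1 : R, 0 < h1 &
      forall N tm h, is_mesh T N tm h -> h <= h1 ->
        (rsq T b f1 f2 (yh N tm) (dyh N tm) (uh N tm)
           <= (Cr * h `^ (2 * lam * eta))%:E)%E.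
Proof.
move=> T0 p0 yLR uLR [Hmem Hfeas _] h00 eta0 Ceta0 Happ.
move=> [[/andP[lam0 lam1] Cl0 eps0] _ Hb Hf].
case: Hmem => [[_ _] Hint Hrep _ _].
case: Hfeas => Hb0 Hf1 Hf2 _.
pose S := Num.sqrt ((ny + nu + (ny + ny))%N%:R) + 1 : R.
have S0 : 0 < S by rewrite /S ltr_wpDl ?sqrtr_ge0.
have S1 : Num.sqrt ((ny + nu)%N%:R) <= S.
  rewrite /S ler_wpDr // ler_sqrt ?ler0n // ler_nat leq_addr //.
have S2 : Num.sqrt ((ny + ny)%N%:R) <= S.
  rewrite /S ler_wpDr // ler_sqrt ?ler0n // ler_nat leq_addl //.
pose K := 3 * S * Ceta.
have K0 : 0 < K by rewrite /K !mulr_gt0.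
pose h1 := Num.min h0 (Num.min 1 ((eps / K) `^ (eta^-1))).
pose Cr := (2 * T + 1) * (Cl * K `^ lam) ^+ 2 + 2 * Ceta ^+ 2.
have Cr0 : 0 < Cr.
  rewrite /Cr; apply: ltr_wpDl.
    by apply: mulr_ge0; [lra | exact: sqr_ge0].
  by apply: mulr_gt0 => //; exact: exprn_gt0.
exists Cr; first exact: Cr0.
have h10 : 0 < h1.
  rewrite /h1 !lt_min h00 ltr01 /=; apply: powR_gt0; exact: divr_gt0.
exists h1; first exact: h10.
move=> N tm h Hmesh hh1.
have hpos : 0 < h.
  case: Hmesh => + _ _ Htm ->.
  case: N tm Htm {hh1} => [//|N'] tm Htm _.
  apply: (lt_le_trans _ (le_bigmax _ (fun k : 'I_N'.+1 => tm k.+1 - tm k) ord0)).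
  by rewrite /= subr_gt0; apply: Htm.
have hh0 : h <= h0 by apply: le_trans hh1 _; rewrite /h1 ge_min lexx.
have hle1 : h <= 1 by apply: le_trans hh1 _; rewrite /h1 !ge_min lexx orbT.
have hpe : h <= (eps / K) `^ (eta^-1).
  by apply: le_trans hh1 _; rewrite /h1 !ge_min lexx !orbT.
have [Hmh Hbh Hd] := Happ N tm h Hmesh hh0.
set Y := yh N tm in Hmh Hbh Hd *.
set dY := dyh N tm in Hmh Hbh Hd *.
set U := uh N tm in Hmh Hbh Hd *.
pose c := Ceta * h `^ eta.
have c0 : 0 < c by rewrite /c mulr_gt0 // powR_gt0.
have Kh : K * h `^ eta <= eps.
  have : h `^ eta <= eps / K.
    have := @ge0_ler_powR _ eta (ltW eta0) h ((eps / K) `^ (eta^-1)).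
    rewrite !nnegrE ltW // powR_ge0 => /(_ isT isT hpe).
    by rewrite /= -powRrM mulVf ?gt_eqF // powRr1 // ltW // divr_gt0.
  by rewrite ler_pdivlMr // mulrC.
have S3c : S * (3 * c) <= eps.
  by have -> : S * (3 * c) = K * h `^ eta by rewrite /K /c; ring.

pose x := h `^ (lam * eta).
have x0 : 0 <= x by exact: powR_ge0.
have hx : h `^ eta <= x.
  rewrite /x; apply: ger_powR; first by rewrite hpos hle1.
  nra.
have x2 : h `^ (2 * lam * eta) = x ^+ 2.
  rewrite /x -powR_mulrn ?powR_ge0 // -powRrM; congr (_ `^ _); ring.
pose A := Cl * K `^ lam * x.
have A0 : 0 <= A by rewrite /A !mulr_ge0 ?powR_ge0 // ltW.
have Hhold : forall z, 0 <= z -> z <= K * h `^ eta -> Cl * z `^ lam <= A.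
  move=> z z0 zK; rewrite /A -mulrA ler_pM2l //.
  apply: (le_trans (ge0_ler_powR (ltW lam0) _ _ zK)).
  - by rewrite nnegrE.
  - by rewrite nnegrE mulr_ge0 ?powR_ge0 // ltW.
  by rewrite powRM ?powR_ge0 ?(ltW K0) // -powRrM /x (mulrC eta).
have SK : S * (3 * c) = K * h `^ eta by rewrite /K /c; ring.
have c30 : 0 <= 3 * c by rewrite mulr_ge0 // ltW.
case: Hmh => [[_ _] HintY _ _ _].
case: Hbh => [[HcontY _ _] _].
move: Hd; rewrite /Xdist => Hd.
have HE0 := esssup_ge0 _ _
  (fun t => norminf_pair (vsub (ys t) (Y t)) (vsub (us t) (U t))) T0 (fun t => norminf_ge0 _ _ _ _ _).
have HL := esqrt_le _ _ _ (L2sq_ge0 _ _ _ (fun t => vsub (dys t) (dY t))) (ltW c0)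
  (le_trans (leeDl _ HE0) Hd).
have HEc := le_trans (leeDr _ (esqrt_ge0 _ _)) Hd.
have Hae := esssup_ae _ _ _ _ c0 HEc.
have Fae := ae_filter_ringOfSetsType (@lebesgue_measure R).
have Hbd : forall i (z0 : R), (z0 = 0 \/ z0 = T) -> `|ys z0 i - Y z0 i| <= 3 * c.
  move=> i z0 hx0.
  have xI : 0 <= z0 <= T by case: hx0 => ->; rewrite ?lexx ?ltW.
  have Hnear := endpoint_near _ _ (fun t => ys t i) (fun t => dys t i) (fun t => Y t i)
     _ _ T0 hx0 c0 (rep_fine _ _ _ _ (Hrep i)) (Hint i) (HcontY i).
  have Hae' : {ae (@lebesgue_measure R), forall t, `[0, T]%classic t ->
               `|(fun t => ys t i - Y t i) t| <= 2 * c}.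
    apply: (@filterS _ _ (ae_filter_ringOfSetsType _) _ _ _ Hae) => t Ht tD.
    by have [+ _] := norminf_le _ _ _ _ _ _ (Ht tD); move/(_ i).
  have := near_ae_bound _ _ _ _ _ _ T0 xI c0 Hnear Hae'.
  by have -> : 2 * c + c = 3 * c by ring.
have Hpb : norm2_pair (vsub (ys 0) (Y 0)) (vsub (ys T) (Y T)) <= S * (3 * c).
  apply: le_trans (norm2_pair_le _ _ _ _ _ _ c30 _ _) _.
  - by move=> i; apply: Hbd; left.
  - by move=> i; apply: Hbd; right.
  by rewrite ler_wpM2r.
have Hbnd : norm2 (b (Y 0) (Y T)) ^+ 2 <= A ^+ 2.
  have := Hb (Y 0) (Y T) (le_trans Hpb S3c).
  rewrite Hb0 => H1.
  have Hpb2 : norm2_pair (vsub (ys 0) (Y 0)) (vsub (ys T) (Y T)) <= K * h `^ eta by rewrite -SK.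
  have H2 := le_trans H1 (Hhold _ (sqrtr_ge0 _) Hpb2).
  have -> : norm2 (b (Y 0) (Y T)) = norm2 (vsub (fun=> 0) (b (Y 0) (Y T))).
    rewrite /norm2 /vsub; congr Num.sqrt; apply: eq_bigr => i _.
    by rewrite sub0r sqrrN.
  by rewrite !expr2; apply: ler_pM => //; exact: sqrtr_ge0.
pose g := fun t => norm2 (vsub (dys t) (dY t)) ^+ 2.
have Hint_ae : {ae (@lebesgue_measure R), forall t, Icc 0 T t ->
    (((norm2_pair (vsub (f1 (Y t) (U t) t) (dY t)) (f2 (Y t) (U t) t)) ^+ 2)%:E
    <= (2 * A ^+ 2 + 2 * g t)%:E)%E}.
  have Hc := filterS2 Fae (fun t a b => conj a b) Hf2 Hae.
  apply: (filterS2 Fae _ Hf1 Hc) => t Ht1 [Ht2 Ht3] tD.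
  have tI : 0 <= t <= T by move: tD; rewrite /Icc /= in_itv.
  have [Hv Hw] := norminf_le _ _ _ _ _ _ (Ht3 tD).
  have Hpt : norm2_pair (vsub (ys t) (Y t)) (vsub (us t) (U t)) <= S * (3 * c).
    apply: le_trans (norm2_pair_le _ _ _ _ _ _ c30 _ _) _.
    - by move=> i; apply: le_trans (Hv i) _; rewrite ler_pM2r //; lra.
    - by move=> j; apply: le_trans (Hw j) _; rewrite ler_pM2r //; lra.
    by rewrite ler_wpM2r.
  have Hpt2 : norm2_pair (vsub (ys t) (Y t)) (vsub (us t) (U t)) <= K * h `^ eta by rewrite -SK.
  have HA := le_trans (Hf t tI _ _ (le_trans Hpt S3c)) (Hhold _ (sqrtr_ge0 _) Hpt2).
  rewrite -(Ht1 tI) (Ht2 tI) in HA.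
  rewrite lee_fin; apply: le_trans (integrand_le _ _ _ (f1 (Y t) (U t) t) (dys t) (dY t) (f2 (Y t) (U t) t)) _.
  rewrite lerD2r ler_pM2l //; rewrite !expr2; apply: ler_pM => //; exact: sqrtr_ge0.
have mD : measurable (Icc 0 T) by exact: measurable_itv.
have mg : measurable_fun (Icc 0 T) g.
  rewrite (_ : g = fun t => \sum_i (dys t i - dY t i) ^+ 2); last first.
    by apply/funext => t; rewrite /g norm2_sq.
  apply: measurable_sum => i; apply: measurable_funX; apply: measurable_funB.
  - by apply/measurable_EFinP; exact: (measurable_int _ (Hint i)).
  - by apply/measurable_EFinP; exact: (measurable_int _ (HintY i)).
have muD : @lebesgue_measure R (Icc 0 T) = T%:E.
  by rewrite /Icc lebesgue_measure_itv /= lte_fin T0 /= oppr0 adde0.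
have HI : (\int[@lebesgue_measure R]_(t in Icc 0 T)
    (((norm2_pair (vsub (f1 (Y t) (U t) t) (dY t)) (f2 (Y t) (U t) t)) ^+ 2)%:E)
    <= ((2 * A ^+ 2) * T + 2 * c ^+ 2)%:E)%E.
  have F0 : forall t, Icc 0 T t -> (0 <= ((norm2_pair (vsub (f1 (Y t) (U t) t) (dY t)) (f2 (Y t) (U t) t)) ^+ 2)%:E)%E.
    by move=> t _; rewrite lee_fin sqr_ge0.
  have G0 : forall t, Icc 0 T t -> (0 <= (2 * A ^+ 2 + 2 * g t)%:E)%E.
    by move=> t _; rewrite lee_fin addr_ge0 // mulr_ge0 // ?sqr_ge0.
  have MG : measurable_fun (Icc 0 T) (fun t => (2 * A ^+ 2 + 2 * g t)%:E).
    apply/measurable_EFinP; apply: measurable_funD; first exact: measurable_cst.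
    by apply: measurable_funM; [exact: measurable_cst | exact: mg].
  apply: le_trans (ae_le_integral_nm _ _ _ (@lebesgue_measure R) _ mD _ _ F0 G0 MG Hint_ae) _.
  under eq_integral => t _ do rewrite EFinD (EFinM 2 (g t)).
  have mgE : measurable_fun (Icc 0 T) (fun t => (g t)%:E) by apply/measurable_EFinP.
  rewrite ge0_integralD //; last first.
  all: try (by move=> t _; rewrite lee_fin; nra).
  all: try (by apply: measurable_cst).
  all: try (by move=> t _; apply: mule_ge0 => //; rewrite lee_fin sqr_ge0).
  all: try (by apply: measurable_funeM).
  rewrite ge0_integralZl_EFin //; last first.
  all: try (by move=> t _; rewrite lee_fin sqr_ge0).

  have -> : (\int[@lebesgue_measure R]_(x in Icc 0 T) (2 * A ^+ 2)%:E
            = (2 * A ^+ 2)%:E * T%:E)%E.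
    by rewrite -muD; apply: integral_cst.
  rewrite -EFinM (EFinD (2 * A ^+ 2 * T)); apply: leeD => //.
  rewrite EFinM; apply: lee_wpmul2l => //; exact: HL.
rewrite /rsq x2.
apply: le_trans (leeD HI (_ : (_ <= (A ^+ 2)%:E)%E)) _.
  by rewrite lee_fin.
rewrite -EFinD lee_fin.
have hc : c <= Ceta * x by rewrite /c ler_pM2l.
have hc2 : Ceta ^+ 2 * h `^ eta ^+ 2 <= Ceta ^+ 2 * x ^+ 2.
  rewrite -!exprMn !expr2; apply: ler_pM => //; exact: ltW.
rewrite /Cr /A.
rewrite !exprMn.
set P := Cl ^+ 2 * K `^ lam ^+ 2.
have P0 : 0 <= P by rewrite /P mulr_ge0 // sqr_ge0.
have X0 : 0 <= x ^+ 2 by exact: sqr_ge0.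
lra.
Qed.
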